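(* Let $\mathbb{K}$ be a field, $k\geq 1$, and let $\mathcal{C}\subseteq\mathbb{K}^{2k}$ be a self-dual linear code (so $\dim\mathcal{C}=k$). Then $$\dim_{\mathbb{K}}\big(\mathcal{C}^{(2)}\big)=2k-\mathrm{nb}(\mathcal{C}).$$
   Context: A linear code of length $n$ over $\mathbb{K}$ is a $\mathbb{K}$-subspace $\mathcal{C}\subseteq\mathbb{K}^n$; it is self-dual if $\mathcal{C}=\mathcal{C}^\perp$, where $\mathcal{C}^\perp=\{x\in\mathbb{K}^n:\sum_i x_ic_i=0\ \forall c\in\mathcal{C}\}$. The Schur (componentwise) product of $v,w\in\mathbb{K}^n$ is $v\ast w=(v_1w_1,\dots,v_nw_n)$, and the Schur square $\mathcal{C}^{(2)}$ is the $\mathbb{K}$-span of all $c\ast c'$ with $c,c'\in\mathcal{C}$. Two codes are equivalent if one is obtained from the other by a permutation of coordinates. For codes $\mathcal{C}_1\subseteq\mathbb{K}^{n_1}$, $\mathcal{C}_2\subseteq\mathbb{K}^{n_2}$, the direct sum is $\mathcal{C}_1\oplus\mathcal{C}_2=\{(c_1,c_2):c_i\in\mathcal{C}_i\}\subseteq\mathbb{K}^{n_1+n_2}$. A code is decomposable if it is equivalent to the direct sum of two nontrivial (nonzero, positive-length) codes, and indecomposable otherwise. Every code is equivalent to a direct sum of indecomposable codes (blocks), and the number of blocks is an invariant of the code, denoted $\mathrm{nb}(\mathcal{C})$. *)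

(* Defs.v *)
From HB Require Import structures.
From mathcomp Require Import all_boot all_order all_algebra.
Set Implicit Arguments. Unset Strict Implicit. Unset Printing Implicit Defensive.
Import GRing.Theory.
Local Open Scope ring_scope.

Definition code (K : fieldType) (n : nat) := {vspace 'rV[K]_n}.

Definition dotv (K : fieldType) (n : nat) (x y : 'rV[K]_n) : K :=
  \sum_(i < n) x ord0 i * y ord0 i.

Definition self_dual (K : fieldType) (n : nat) (C : code K n) : Prop :=
  forall x : 'rV[K]_n, x \in C <-> (forall c, c \in C -> dotv x c = 0).

Definition schur (K : fieldType) (n : nat) (v w : 'rV[K]_n) : 'rV[K]_n :=
  \row_(i < n) (v ord0 i * w ord0 i).

(* Schur square: span of all products c * c' for c, c' in C
   (spanned by products of basis vectors, by bilinearity). *)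
Definition schur_sq (K : fieldType) (n : nat) (C : code K n) : code K n :=
  <<[seq schur c d | c <- vbasis C, d <- vbasis C]>>%VS.

Definition coord_space (K : fieldType) (n : nat) (S : {set 'I_n}) : code K n :=
  <<[seq (delta_mx (ord0 : 'I_1) i : 'rV[K]_n) | i <- enum S]>>%VS.

(* P is a partition of the coordinates {0..n-1} such that C is (up to the
   corresponding coordinate permutation) the direct sum of the codes
   C restricted to the blocks S in P, each of which is nonzero. *)
Definition block_decomp (K : fieldType) (n : nat) (C : code K n)
    (P : {set {set 'I_n}}) : bool :=
  [&& partition P [set: 'I_n],
      C == (\sum_(S in P) (C :&: coord_space K S))%VS &
      [forall S in P, (C :&: coord_space K S)%VS != 0%VS]].

(* Number of blocks: the maximal number of nonzero blocks in such a
   decomposition, i.e. the number of indecomposable blocks. *)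
Definition nb (K : fieldType) (n : nat) (C : code K n) : nat :=
  \max_(P : {set {set 'I_n}} | block_decomp C P) #|P|.

(* Main.v *)
Require Import Defs.
From HB Require Import structures.
From mathcomp Require Import all_boot all_order all_algebra zify ring.
Set Implicit Arguments. Unset Strict Implicit. Unset Printing Implicit Defensive.
Import GRing.Theory.
Local Open Scope ring_scope.

Section S.
Variables (K : fieldType) (n : nat).
Local Notation V := 'rV[K]_n.

Lemma span_lin (f : V -> K) (X : seq V) :
  (forall a u v, f (a *: u + v) = a * f u + f v) ->
  (forall x, x \in X -> f x = 0) -> forall v, v \in <<X>>%VS -> f v = 0.
Proof.
move=> fl fX v Xv; rewrite (@coord_span _ _ _ (in_tuple X) v Xv).
have f0 : f 0 = 0.
  by have := fl 1 0 0; rewrite scale1r addr0 mul1r => /eqP; rewrite addrC -subr_eq subrr eq_sym => /eqP.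
elim/big_ind: _ => //.
  by move=> x y fx fy; rewrite -[x]scale1r fl fx fy mulr0 addr0.
move=> i _; rewrite -[_ *: _]addr0 fl f0 addr0 fX ?mulr0 //.
by rewrite mem_nth.
Qed.

Lemma dotv_linr (x : V) : forall a u v, dotv x (a *: u + v) = a * dotv x u + dotv x v.
Proof.
move=> a u v; rewrite /dotv mulr_sumr -big_split /=; apply: eq_bigr => i _.
by rewrite !mxE mulrDr mulrCA.
Qed.

Lemma dotv_linl (y : V) : forall a u v, dotv (a *: u + v) y = a * dotv u y + dotv v y.
Proof.
move=> a u v; rewrite /dotv mulr_sumr -big_split /=; apply: eq_bigr => i _.
by rewrite !mxE mulrDl mulrA.
Qed.

Lemma dotv_schur (x c d : V) : dotv (schur x c) d = dotv x (schur c d).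
Proof. by apply: eq_bigr => i _; rewrite !mxE mulrA. Qed.


Lemma schur_linr (x : V) a u v : schur x (a *: u + v) = a *: schur x u + schur x v.
Proof. by apply/rowP => i; rewrite !mxE mulrDr mulrCA. Qed.

Lemma schur_linl (y : V) a u v : schur (a *: u + v) y = a *: schur u y + schur v y.
Proof. by apply/rowP => i; rewrite !mxE mulrDl mulrA. Qed.

Variables (C : code K n).
Hypothesis sdC : self_dual C.

Lemma sdC1 c d : c \in C -> d \in C -> dotv c d = 0.
Proof. by move=> cC dC; apply: (proj1 (sdC c) cC). Qed.

Lemma sdC2 x : (forall d, d \in C -> dotv x d = 0) -> x \in C.
Proof. by move=> h; apply/(sdC x). Qed.

Lemma spanC : <<vbasis C>>%VS = C.
Proof. exact: span_basis (vbasisP C). Qed.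

Definition W := schur_sq C.
Definition Mw : 'M[K]_(n, \dim W) := \matrix_(i < n, j < \dim W) (vbasis W)`_j ord0 i.
Definition phi : 'Hom(V, 'rV[K]_(\dim W)) := linfun (mulmxr Mw).
Definition A := lker phi.

Lemma memA x : x \in A <-> forall w, w \in W -> dotv x w = 0.
Proof.
rewrite memv_ker lfunE /=; split.
  move=> /eqP h w; rewrite -(span_basis (vbasisP W)); apply: span_lin.
    exact: dotv_linr.
  move=> y /(nthP 0) [j]; rewrite size_tuple => jlt <-.
  have := congr1 (fun m : 'rV[K]_(\dim W) => m ord0 (Ordinal jlt)) h; rewrite !mxE => <-.
  by apply: eq_bigr => i _; rewrite mxE.
move=> h; apply/eqP/rowP => j; rewrite !mxE -[RHS](h (vbasis W)`_j).
  by apply: eq_bigr => i _; rewrite mxE.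
by apply: vbasis_mem; rewrite mem_nth // size_tuple.
Qed.

Lemma gen_in_W b b' : b \in vbasis C -> b' \in vbasis C -> schur b b' \in W.
Proof. by move=> hb hb'; apply: memv_span; apply: allpairs_f. Qed.

Lemma memAP x : x \in A <-> forall c, c \in C -> schur x c \in C.
Proof.
split.
  move=> /memA xA c cC; apply: sdC2 => d; rewrite -spanC; apply: span_lin.
    exact: dotv_linr.
  move=> b' b'C; move: c cC; rewrite -spanC; apply: (span_lin (f := fun c => dotv (schur x c) b')).
    by move=> a u v; rewrite schur_linr dotv_linl.
  by move=> b bC; rewrite dotv_schur; apply: xA; apply: gen_in_W.
move=> h; apply/memA => w; rewrite /W /schur_sq; apply: span_lin; first exact: dotv_linr.
move=> y /allpairsP [[b b'] [/= hb hb' ->]].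
by rewrite -dotv_schur; apply: sdC1; [apply: h|]; apply: vbasis_mem.
Qed.


Lemma dimfull m : \dim (fullv : {vspace 'rV[K]_m}) = m.
Proof. by rewrite dimvf /dim /= mul1n. Qed.

Lemma dimA_W : (n <= \dim A + \dim W)%N.
Proof.
have h := limg_ker_dim phi fullv; rewrite capfv dimfull in h.
have h1 := dimvS (subvf (phi @: fullv)); rewrite dimfull in h1.
rewrite /A; lia.
Qed.

Definition ind (S : {set 'I_n}) : V := \row_j (if j \in S then 1 else 0).
Definition ev (i : 'I_n) : V := delta_mx ord0 i.
Definition one : V := const_mx 1.

Lemma one_in_A : one \in A.
Proof.
apply/memAP => c cC; suff -> : schur one c = c by [].
by apply/rowP => i; rewrite !mxE mul1r.
Qed.

Lemma schur_in_A x y : x \in A -> y \in A -> schur x y \in A.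
Proof.
move=> /memAP hx /memAP hy; apply/memAP => c cC.
suff -> : schur (schur x y) c = schur x (schur y c) by apply: hx; apply: hy.
by apply/rowP => i; rewrite !mxE mulrA.
Qed.

Definition sim (i j : 'I_n) := all (fun x : V => x ord0 i == x ord0 j) (vbasis A).

Lemma simP i j x : sim i j -> x \in A -> x ord0 i = x ord0 j.
Proof.
move=> /allP h xA; apply/eqP; rewrite -subr_eq0; apply/eqP.
move: x xA; rewrite -(span_basis (vbasisP A)).
apply: (span_lin (f := fun x : V => x ord0 i - x ord0 j)).
  by move=> a u v; rewrite !mxE; ring.
by move=> x /h /eqP ->; rewrite subrr.
Qed.

Lemma sim_equiv : equivalence_rel sim.
Proof.
move=> x y z; split; first by apply/allP => v _.
move=> /allP hxy; apply: eq_in_all => v /hxy /eqP ->; done.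
Qed.

Definition P := equivalence_partition sim setT.

Lemma partP : partition P setT.
Proof. by apply: equivalence_partitionP => x y z _ _ _; apply: sim_equiv. Qed.

Lemma prod_in_A (F : 'I_n -> V) (r : seq 'I_n) : (forall j, F j \in A) ->
  (\row_l \prod_(j <- r) F j ord0 l : V) \in A.
Proof.
move=> FA; elim: r => [|a r IH].
  suff -> : (\row_l \prod_(j <- [::]) F j ord0 l : V) = one by apply: one_in_A.
  by apply/rowP => l; rewrite !mxE big_nil.
suff -> : (\row_l \prod_(j <- a :: r) F j ord0 l : V) =
   schur (F a) (\row_l \prod_(j <- r) F j ord0 l) by apply: schur_in_A.
by apply/rowP => l; rewrite !mxE big_cons.
Qed.

Lemma ind_class i : ind [set y in [set: 'I_n] | sim i y] \in A.
Proof.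
pose xj j := nth 0 (vbasis A) (find (fun x : V => x ord0 i != x ord0 j) (vbasis A)).
pose yj j := (xj j ord0 i - xj j ord0 j)^-1 *: (xj j - xj j ord0 j *: one).
have hy j : ~~ sim i j -> [/\ yj j \in A, yj j ord0 i = 1 & yj j ord0 j = 0].
  move=> nij; have hh : has (fun x : V => x ord0 i != x ord0 j) (vbasis A).
    by case/allPn: nij => x xin xne; apply/hasP; exists x.
  have xA : xj j \in A.
    by apply: vbasis_mem; rewrite mem_nth // -has_find.
  have xne : xj j ord0 i != xj j ord0 j by apply: (nth_find 0 hh).
  split.
  - by rewrite memvZ // memvB // memvZ // one_in_A.
  - rewrite !mxE mulr1 mulVf // subr_eq0. done.
  - by rewrite !mxE mulr1 subrr mulr0.
pose F j := if sim i j then one else yj j.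
have FA j : F j \in A by rewrite /F; case: ifP => [_|/negbT /hy []//]; apply: one_in_A.
suff -> : ind [set y in [set: 'I_n] | sim i y] = \row_l \prod_(j <- index_enum 'I_n) F j ord0 l.
  exact: prod_in_A.
apply/rowP => l; rewrite !mxE !inE /=.
case: ifP => sil.
  rewrite big1 // => j _; rewrite -(simP sil (FA j)) /F.
  by case: ifP => [_|/negbT /hy [] //]; rewrite mxE.
rewrite (bigD1 l) //= /F sil; have [_ _ ->] := hy l (negbT sil).
by rewrite mul0r.
Qed.


Lemma if10 (b : bool) (y : K) : (if b then 1 else 0) * y = if b then y else 0.
Proof. by case: b; rewrite ?mul1r ?mul0r. Qed.

Lemma sum_part (Q : {set {set 'I_n}}) (hQ : partition Q [set: 'I_n])
   (F : {set 'I_n} -> K) l :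
  \sum_(S in Q) (if l \in S then F S else 0) = F (pblock Q l).
Proof.
case/and3P: hQ => /eqP hc ht _.
have lc : l \in cover Q by rewrite hc.
rewrite (bigD1 (pblock Q l)) ?pblock_mem //= mem_pblock lc big1 ?addr0 //.
move=> S /andP [SQ Sne]; case: ifP => // lS.
by move/eqP: Sne; rewrite (def_pblock ht SQ lS).
Qed.

Lemma dotv_ev l (d : V) : dotv (ev l) d = d ord0 l.
Proof.
rewrite /dotv (bigD1 l) //= big1 ?addr0.
  by rewrite mxE !eqxx mul1r.
by move=> i il; rewrite mxE eqxx /=; case: eqP il => [->|]; rewrite ?eqxx ?mul0r.
Qed.

Lemma indP_A S : S \in P -> ind S \in A.
Proof. by case/imsetP => x _ ->; apply: ind_class. Qed.

Lemma P_same S a b x : S \in P -> a \in S -> b \in S -> x \in A -> x ord0 a = x ord0 b.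
Proof.
case/imsetP => z _ -> ; rewrite !inE /= => za zb xA.
by rewrite -(simP za xA) (simP zb xA).
Qed.

Lemma schur_ind_coord S c : schur (ind S) c \in coord_space K S.
Proof.
have -> : schur (ind S) c = \sum_(i in S) c ord0 i *: ev i.
  apply/rowP => l; rewrite !mxE summxE if10.
  rewrite (eq_bigr (fun i => if i == l then c ord0 l else 0)); last first.
    by move=> i _; rewrite !mxE eqxx /= eq_sym; case: eqP => [->|_]; rewrite ?mulr1 ?mulr0.
  case: (boolP (l \in S)) => lS.
    by rewrite (bigD1 l) //= eqxx big1 ?addr0 // => i /andP [_ /negbTE ->].
  by rewrite big1 // => i iS; case: eqP => // il; rewrite -il iS in lS.
by apply: memv_suml => i iS; apply: memvZ; apply: memv_span; apply: map_f; rewrite mem_enum.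
Qed.


Lemma sum_ind_c (Q : {set {set 'I_n}}) (hQ : partition Q [set: 'I_n]) (c : V) :
  c = \sum_(S in Q) schur (ind S) c.
Proof.
apply/rowP => l; rewrite summxE.
under eq_bigr => S _ do rewrite !mxE if10.
by rewrite (sum_part hQ (fun _ => c ord0 l)).
Qed.

Lemma C_decomp : C == (\sum_(S in P) (C :&: coord_space K S))%VS.
Proof.
rewrite eqEsubv; apply/andP; split.
  apply/subvP => c cC; rewrite (sum_ind_c partP c); apply: memv_sumr => S SP.
  rewrite memv_cap schur_ind_coord andbT.
  exact: (proj1 (memAP (ind S)) (indP_A SP)).
by apply/subv_sumP => S _; apply: capvSl.
Qed.


Lemma C_has l : exists2 c, c \in C & c ord0 l != 0.
Proof.
case: (boolP (has (fun c : V => c ord0 l != 0) (vbasis C))).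
  by case/hasP => c cb cl; exists c => //; apply: vbasis_mem.
move=> /hasPn hb.
have evC : ev l \in C.
  apply: sdC2 => d; rewrite dotv_ev -spanC.
  apply: (span_lin (f := fun d : V => d ord0 l)).
    by move=> a u v; rewrite !mxE.
  by move=> x /hb; rewrite negbK => /eqP.
have := sdC1 evC evC; rewrite dotv_ev mxE !eqxx /= => /eqP.
by rewrite oner_eq0.
Qed.

Lemma block_nz S : S \in P -> (C :&: coord_space K S)%VS != 0%VS.
Proof.
move=> SP; have [_ _ nz0] := and3P partP.
have : S != set0 by apply: contraNneq nz0 => <-.
case/set0Pn => l lS; have [c cC cl] := C_has l.
apply/negP => /eqP h0.
have : schur (ind S) c \in (C :&: coord_space K S)%VS.
  rewrite memv_cap schur_ind_coord andbT.
  exact: (proj1 (memAP (ind S)) (indP_A SP)).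
rewrite h0 memv0 => /eqP /rowP /(_ l); rewrite !mxE lS mul1r => /eqP.
by rewrite (negbTE cl).
Qed.

Lemma validP : block_decomp C P.
Proof.
rewrite /block_decomp partP C_decomp /=; apply/forall_inP => S SP.
exact: block_nz.
Qed.

Lemma P_le_nb : (#|P| <= nb C)%N.
Proof. rewrite /nb; exact: (leq_bigmax_cond P validP). Qed.

Variable i0 : 'I_n.
Definition rep (S : {set 'I_n}) := odflt i0 [pick x in S].

Lemma rep_in (Q : {set {set 'I_n}}) (hQ : partition Q [set: 'I_n]) S :
  S \in Q -> rep S \in S.
Proof.
move=> SQ; have [_ _ nz0] := and3P hQ.
have : S != set0 by apply: contraNneq nz0 => <-.
case/set0Pn => l lS; rewrite /rep; case: pickP => //= h.
by have := h l; rewrite lS.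
Qed.

Lemma dimA_P : (\dim A <= #|P|)%N.
Proof.
have sub : (A <= <<[seq ind B | B <- enum P]>>)%VS.
  apply/subvP => x xA.
  have -> : x = \sum_(S in P) x ord0 (rep S) *: ind S.
    apply/rowP => l; rewrite summxE.
    under eq_bigr => B _ do rewrite !mxE mulrC if10.
    rewrite (sum_part partP (fun B => x ord0 (rep B))).
    have [/eqP hc _ _] := and3P partP.
    have lc : l \in cover P by rewrite hc.
    have bP := pblock_mem lc.
    symmetry; apply: (P_same bP (rep_in partP bP)) => //.
    by rewrite mem_pblock.
  apply: memv_suml => S SP; apply: memvZ; apply: memv_span.
  by apply: map_f; rewrite mem_enum.
apply: leq_trans (dimvS sub) _.
by apply: leq_trans (dim_span _) _; rewrite size_map -cardE.
Qed.


Definition csum (S : {set 'I_n}) (v : V) := \sum_(i in S) v ord0 i.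

Lemma csum_lin S a u v : csum S (a *: u + v) = a * csum S u + csum S v.
Proof.
rewrite /csum mulr_sumr -big_split /=; apply: eq_bigr => i _.
by rewrite !mxE.
Qed.

Lemma csum_sum S m (k : 'I_m -> K) (F : 'I_m -> V) :
  csum S (\sum_(t < m) k t *: F t) = \sum_(t < m) k t * csum S (F t).
Proof.
rewrite /csum; under eq_bigr => i _ do rewrite summxE.
rewrite exchange_big /=; apply: eq_bigr => t _; rewrite mulr_sumr.
by apply: eq_bigr => i _; rewrite mxE.
Qed.

Lemma csum_ev S j : csum S (ev j) = if j \in S then 1 else 0.
Proof.
rewrite /csum; under eq_bigr => i _ do rewrite mxE eqxx /=.
case: (boolP (j \in S)) => jS.
  by rewrite (bigD1 j) //= eqxx big1 ?addr0 // => i /andP [_ /negbTE ->].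
by rewrite big1 // => i iS; case: eqP => // ij; rewrite -ij iS in jS.
Qed.

Lemma coord_supp T (v : V) l : v \in coord_space K T -> l \notin T -> v 0 l = 0.
Proof.
move=> vT lT; move: v vT; apply: (span_lin (f := fun v : V => v 0 l)).
  by move=> a u v; rewrite !mxE.
move=> x /mapP [i]; rewrite mem_enum => iT ->; rewrite mxE eqxx /=.
by case: eqP => // li; rewrite li iT in lT.
Qed.

Lemma schur_sumr (x : V) (Q : {set {set 'I_n}}) (F : {set 'I_n} -> V) :
  schur x (\sum_(T in Q) F T) = \sum_(T in Q) schur x (F T).
Proof.
apply/rowP => l; rewrite mxE !summxE mulr_sumr.
by apply: eq_bigr => T _; rewrite mxE.
Qed.

Section Valid.
Variable P0 : {set {set 'I_n}}.
Hypothesis vP0 : block_decomp C P0.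

Lemma partP0 : partition P0 [set: 'I_n].
Proof. by case/and3P: vP0. Qed.

Lemma ind_stab S b : S \in P0 -> b \in C -> schur (ind S) b \in C.
Proof.
move=> SP bC; case/and3P: vP0 => hp /eqP hC _.
have [_ ht _] := and3P hp.
move: bC; rewrite [in X in X -> _]hC => /memv_sumP [vs hvs ->].
rewrite schur_sumr; apply: memv_suml => T TP.
have /memv_capP [vC vT] := hvs T TP.
have -> : schur (ind S) (vs T) = if T == S then vs T else 0.
  apply/rowP => l; case: eqP => [eTS | TS].
    subst T; rewrite !mxE.
    by case: ifP => lS; rewrite ?mul1r // mul0r (coord_supp vT) // lS.
  rewrite !mxE; case: ifP => lS; rewrite ?mul0r // mul1r (coord_supp vT) //.
  apply/negP => lT; apply: TS.
  by rewrite -(def_pblock ht TP lT) (def_pblock ht SP lS).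
by case: eqP => _; rewrite ?mem0v.
Qed.

Lemma csumW S w : S \in P0 -> w \in W -> csum S w = 0.
Proof.
move=> SP; rewrite /W /schur_sq; move: w; apply: span_lin; first exact: csum_lin.
move=> y /allpairsP [[b b'] [/= hb hb' ->]].
have -> : csum S (schur b b') = dotv (schur (ind S) b) b'.
  rewrite /csum /dotv big_mkcond /=; apply: eq_bigr => i _.
  by rewrite !mxE; case: ifP; rewrite ?mul1r ?mul0r.
by apply: sdC1; [apply: ind_stab => //|]; apply: vbasis_mem.
Qed.

Definition r0 := enum P0.
Definition Y := [seq ev (rep B) | B <- r0].

Lemma csumY (k : 'I_(size Y) -> K) (s : 'I_(size Y)) :
  csum (nth set0 r0 s) (\sum_(t < size Y) k t *: Y`_t) = k s.
Proof.
have sz : size Y = size r0 by rewrite size_map.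
have inr (t : 'I_(size Y)) : nth set0 r0 t \in P0.
  by rewrite -mem_enum mem_nth // -sz.
rewrite csum_sum (bigD1 s) //= big1 ?addr0.
  by rewrite (nth_map set0) -?sz // csum_ev (rep_in partP0 (inr s)) mulr1.
move=> t ts; rewrite (nth_map set0) -?sz // csum_ev.
case: ifP => h; rewrite ?mulr0 //.
have [_ ht _] := and3P partP0.
have rt := rep_in partP0 (inr t).
have e : nth set0 r0 t = nth set0 r0 s.
  by rewrite -(def_pblock ht (inr t) rt) (def_pblock ht (inr s) h).
move/eqP: ts; case; apply/val_inj => /=.
apply/eqP; rewrite -(@nth_uniq _ set0 r0) ?e // -?sz //; exact: enum_uniq.
Qed.

Lemma freeY : free Y.
Proof.
apply/(@freeP _ _ _ (in_tuple Y)) => k hk s.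
by rewrite -(csumY k s) hk /csum big1 // => i _; rewrite mxE.
Qed.

Lemma capWY : (W :&: <<Y>> = 0)%VS.
Proof.
apply/eqP; rewrite -subv0; apply/subvP => v /memv_capP [vW vY]; rewrite memv0.
have hv := @coord_span _ _ _ (in_tuple Y) v vY.
rewrite hv; apply/eqP; apply: big1 => t _.
have -> : coord (in_tuple Y) t v = 0.
  rewrite -(csumY (fun t => coord (in_tuple Y) t v) t) -hv (csumW _ vW) //.
  by rewrite -mem_enum mem_nth // /r0 -(size_map (fun B => ev (rep B))).
by rewrite scale0r.
Qed.

Lemma upper : (#|P0| + \dim W <= n)%N.
Proof.
have h := dimv_sum_cap W <<Y>>; rewrite capWY dimv0 addn0 in h.
have fY : \dim <<Y>> = #|P0| by rewrite (eqP freeY) size_map cardE.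
have := dimvS (subvf (W + <<Y>>)%VS); rewrite dimfull; by rewrite -fY addnC -h.
Qed.

End Valid.

Lemma main_gen : \dim W = (n - nb C)%N.
Proof.
have h1 : (nb C <= n - \dim W)%N.
  by rewrite /nb; apply/bigmax_leqP => Q vQ; have := upper vQ; lia.
have hW : (\dim W <= n)%N by have := dimvS (subvf W); rewrite dimfull.
have key : forall p q x y : nat, (y <= n)%N -> (q <= n - y)%N -> (p <= q)%N -> (x <= p)%N -> (n <= x + y)%N -> y = (n - q)%N by move=> *; lia.
exact: key hW h1 P_le_nb dimA_P dimA_W.
Qed.

End S.

Unset Implicit Arguments.

Theorem mainTheorem1 (K : fieldType) (k : nat) (C : code K (2 * k)) :
  (1 <= k)%N -> self_dual C ->
  \dim (schur_sq C) = (2 * k - nb C)%N.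
Proof.
move=> hk sd.
have h0 : (0 < 2 * k)%N by lia.
exact: (main_gen sd (Ordinal h0)).
Qed.
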